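(* Let $\varepsilon\ge0$ and let $\phi:\mathcal{B}\to\mathcal{C}\subseteq\mathcal{B}$ satisfy both $\|\phi(b)-b\|_1\le\varepsilon$ for all $b$ and $\phi(b_1)=\phi(b_2)\Rightarrow\|b_1-b_2\|_1\le\varepsilon$. Let $\{p_c\}_{c\in\mathcal{C}}$ be any family of distributions with $p_c$ supported on $\phi^{-1}(c)$. Let $\pi:\mathcal{B}\to\Delta(\mathcal{A})$ satisfy $\|\pi(b_1)-\pi(b_2)\|_1\le L_\pi\|b_1-b_2\|_1$ (local stability), and assume $V^{[\pi_\phi]_{\rm true}}_{\rm true}$ is $L_V$-Lipschitz on $\mathcal{B}$ with respect to $\|\cdot\|_1$ (value stability). Then $$\big\|V^\pi_{\rm true}-[V^{\pi_\phi}_{\rm bin}]_{\rm true}\big\|_\infty\le L^{[1]}_\phi\,\varepsilon,\qquad L^{[1]}_\phi:=\frac{(L_\pi+1)R_{\max}+2L_V}{1-\gamma}+\frac{\gamma R_{\max}L_\pi+R_{\max}}{(1-\gamma)^2}.$$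
   Context: Finite POMDP with finite $\mathcal{S},\mathcal{A},\mathcal{O}$, transition $\mathbb{T}$, emission $\mathbb{O}$, reward $r:\mathcal{S}\times\mathcal{A}\to[0,R_{\max}]$, discount $\gamma\in[0,1)$. $P(o\mid b,a)=\sum_{s,s'}b(s)\mathbb{T}(s'\mid s,a)\mathbb{O}(o\mid s')$, $b^{o,a}(s')\propto\sum_s b(s)\mathbb{T}(s'\mid s,a)\mathbb{O}(o\mid s')$; $\mathcal{B}\subseteq\Delta(\mathcal{S})$ is the countable set of reachable beliefs. True system: belief MDP on $\mathcal{B}$ with reward $r(b,a)=\sum_s b(s)r(s,a)$ and transitions $b\mapsto b^{o,a}$ w.p. $P(o\mid b,a)$; $V^\pi_{\rm true}(b)=\mathbb{E}[\sum_{t\ge0}\gamma^tr(b_t,a_t)\mid b_0=b]$. Abstract system: MDP on $\mathcal{C}$ with reward $r_\phi(c,a)=\sum_b p_c(b)r(b,a)$ and transitions $P_\phi(c'\mid c,a)=\sum_bp_c(b)\sum_{o:\phi(b^{o,a})=c'}P(o\mid b,a)$. Abstract policy $\pi_\phi(c):=\pi(c)$ with abstract value $V^{\pi_\phi}_{\rm bin}$. Lifts: $[V_{\rm bin}]_{\rm true}(b)=V_{\rm bin}(\phi(b))$, $[\pi_\phi]_{\rm true}(b)=\pi_\phi(\phi(b))$. *)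

(* Defs.v *)
From HB Require Import structures.
From mathcomp Require Import all_boot all_order all_algebra.
From mathcomp Require Import all_classical all_reals all_analysis.
Set Implicit Arguments. Unset Strict Implicit. Unset Printing Implicit Defensive.
Import Order.TTheory GRing.Theory Num.Theory.
Local Open Scope classical_set_scope.
Local Open Scope ring_scope.

Section POMDP.
Variables (R : realType) (S A O : finType).
(* transition T s a s' = T(s' | s, a); emission Ob s' o = O(o | s') *)
Variables (T : S -> A -> S -> R) (Ob : S -> O -> R) (r : S -> A -> R).
Variable (gamma : R).

Definition belief := S -> R.

Definition is_dist (X : finType) (d : X -> R) :=
  (forall x, 0 <= d x) /\ \sum_(x : X) d x = 1.

Definition norm1 (X : finType) (f : X -> R) : R := \sum_(x : X) `|f x|.

Definition Pobs (b : belief) (a : A) (o : O) : R :=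
  \sum_(s : S) \sum_(s' : S) b s * T s a s' * Ob s' o.

(* belief update b^{o,a} (defined as 0 when P(o|b,a) = 0; such
   branches always carry weight P(o|b,a) = 0) *)
Definition bupd (b : belief) (a : A) (o : O) : belief :=
  fun s' => (\sum_(s : S) b s * T s a s' * Ob s' o) / Pobs b a o.

Definition rb (b : belief) (a : A) : R := \sum_(s : S) b s * r s a.

Inductive reachable (b0 : belief) : belief -> Prop :=
| reach0 : reachable b0 b0
| reachS b a o : reachable b0 b -> 0 < Pobs b a o ->
    reachable b0 (bupd b a o).

Fixpoint Vtrue_n (pol : belief -> A -> R) (n : nat) (b : belief) : R :=
  match n with
  | 0 => 0
  | n'.+1 => \sum_(a : A) pol b a *
      (rb b a + gamma * \sum_(o : O) Pobs b a o * Vtrue_n pol n' (bupd b a o))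
  end.

(* V^pol_true(b) = E[ sum_{t>=0} gamma^t r(b_t,a_t) | b_0 = b ]
   (limit of the nondecreasing finite-horizon expectations) *)
Definition Vtrue (pol : belief -> A -> R) (b : belief) : \bar R :=
  lim ((Vtrue_n pol n b)%:E @[n --> \oo]).

(* abstract system on C, built from phi and the family p_c (p c b = p_c(b)) *)
Variables (B C : set belief) (phi : belief -> belief) (p : belief -> belief -> R).

Definition rphi (c : belief) (a : A) : \bar R :=
  \esum_(b in B) (p c b * rb b a)%:E.

Definition Pphi (c' c : belief) (a : A) : \bar R :=
  \esum_(b in B) (p c b *
     \sum_(o : O | `[< phi (bupd b a o) = c' >]) Pobs b a o)%:E.

Fixpoint Vbin_n (polphi : belief -> A -> R) (n : nat) (c : belief) : \bar R :=
  match n with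
  | 0 => 0%E
  | n'.+1 => (\sum_(a : A) (polphi c a)%:E *
      (rphi c a + gamma%:E * \esum_(c' in C) (Pphi c' c a * Vbin_n polphi n' c')))%E
  end.

Definition Vbin (polphi : belief -> A -> R) (c : belief) : \bar R :=
  lim (Vbin_n polphi n c @[n --> \oo]).

End POMDP.

Definition Lphi1 (R : realType) (Lpi LV Rmax gamma : R) : R :=
  ((Lpi + 1) * Rmax + 2 * LV) / (1 - gamma)
  + (gamma * Rmax * Lpi + Rmax) / (1 - gamma) ^+ 2.

(* Main.v *)
Require Import Defs.
From HB Require Import structures.
From mathcomp Require Import all_boot all_order all_algebra.
From mathcomp Require Import all_classical all_reals all_analysis.
From mathcomp Require Import ring lra.
Import numFieldNormedType.Exports.
Import Order.TTheory GRing.Theory Num.Theory.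
Local Open Scope classical_set_scope.
Local Open Scope ring_scope.
Set Implicit Arguments. Unset Strict Implicit. Unset Printing Implicit Defensive.

Section Basic.
Variables (R : realType) (S A O : finType).
Variables (T : S -> A -> S -> R) (Ob : S -> O -> R) (r : S -> A -> R) (Rmax : R).
Hypotheses (hT : forall s a, is_dist (T s a)) (hOb : forall s, is_dist (Ob s))
  (hr : forall s a, 0 <= r s a <= Rmax).

Lemma Pobs_ge0 (b : belief R S) a o : is_dist b -> 0 <= Pobs T Ob b a o.
Proof.
move=> [b0 _]; rewrite /Pobs; apply: sumr_ge0 => s _; apply: sumr_ge0 => s' _.
by rewrite !mulr_ge0 //; [case: (hT s a)|case: (hOb s')].
Qed.

Lemma Pobs_sum1 (b : belief R S) a : is_dist b -> \sum_o Pobs T Ob b a o = 1.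
Proof.
move=> [_ b1]; rewrite /Pobs exchange_big /= -[RHS]b1; apply: eq_bigr => s _.
rewrite exchange_big /=.
transitivity (\sum_(s' : S) b s * T s a s' * \sum_o Ob s' o).
  by apply: eq_bigr => s' _; rewrite mulr_sumr.
under eq_bigr do rewrite (proj2 (hOb _)) mulr1.
by rewrite -mulr_sumr (proj2 (hT s a)) mulr1.
Qed.

Lemma bupd_dist (b : belief R S) a o : is_dist b -> 0 < Pobs T Ob b a o ->
  is_dist (bupd T Ob b a o).
Proof.
move=> hb hP; split.
  move=> s'; rewrite /bupd; apply: divr_ge0; last exact: ltW.
  apply: sumr_ge0 => s _.
  by rewrite !mulr_ge0 //; [case: hb|case: (hT s a)|case: (hOb s')].
rewrite /bupd -mulr_suml.
have -> : \sum_(s' : S) \sum_(s : S) b s * T s a s' * Ob s' o = Pobs T Ob b a o.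
  by rewrite /Pobs exchange_big.
by rewrite mulfV // gt_eqF.
Qed.

Lemma rb_bound (b : belief R S) a : is_dist b -> 0 <= rb r b a <= Rmax.
Proof.
move=> [hb0 hb1]; rewrite /rb; apply/andP; split.
  by apply: sumr_ge0 => s _; rewrite mulr_ge0 //; case/andP: (hr s a).
rewrite -[X in _ <= X]mul1r -hb1 mulr_suml; apply: ler_sum => s _.
by rewrite ler_wpM2l //; case/andP: (hr s a).
Qed.

Lemma reach_dist b0 b : is_dist b0 -> reachable T Ob b0 b -> is_dist b.
Proof. by move=> h; elim => // b' a o _ IH hP; apply: bupd_dist. Qed.

Lemma avg_bound (X : finType) (d : X -> R) (f : X -> R) lo hi :
  is_dist d -> (forall x, 0 < d x -> lo <= f x <= hi) ->
  lo <= \sum_x d x * f x <= hi.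
Proof.
move=> [d0 d1] hf; apply/andP; split.
  rewrite -[X in X <= _]mul1r -d1 mulr_suml; apply: ler_sum => x _.
  have := d0 x; rewrite le0r => /orP[/eqP->|dx]; first by rewrite !mul0r.
  by rewrite ler_wpM2l // (andP (hf x dx)).1.
rewrite -[X in _ <= X]mul1r -d1 mulr_suml; apply: ler_sum => x _.
have := d0 x; rewrite le0r => /orP[/eqP->|dx]; first by rewrite !mul0r.
by rewrite ler_wpM2l // (andP (hf x dx)).2.
Qed.

End Basic.

Section EsumExtra.
Local Open Scope ereal_scope.

Lemma fsum_distr (R : realType) (T : choiceType) (A : set T) (a : T -> \bar R) (k : R) :
  finite_set A -> (forall i, A i -> 0 <= a i) ->
  \sum_(i \in A) (k%:E * a i)%E = (k%:E * \sum_(i \in A) a i)%E.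
Proof.
move=> fA a0; rewrite !fsbig_finite //= big_seq [in RHS]big_seq.
rewrite ge0_sume_distrr // => i; rewrite in_fset_set // inE; exact: a0.
Qed.

Lemma esumZl (R : realType) (T : choiceType) (I : set T) (a : T -> \bar R) (k : R) :
  (0 <= k)%R -> (forall i, I i -> 0 <= a i) ->
  \esum_(i in I) (k%:E * a i)%E = (k%:E * \esum_(i in I) a i)%E.
Proof.
move=> k0 a0; rewrite /esum -ereal_supZl //; last first.
  by apply/set0P; exists 0, set0; [exact: fsets_set0|rewrite fsbig_set0].
congr ereal_sup; apply/seteqP; split => x /=.
  move=> [A [fA AI] <-]; exists (\sum_(i \in A) a i); first by exists A.
  by rewrite fsum_distr // => i /AI /a0.
move=> [y [A [fA AI] <-] <-]; exists A => //.
by rewrite fsum_distr // => i /AI /a0.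
Qed.

Lemma esumZr (R : realType) (T : choiceType) (I : set T) (a : T -> \bar R) (k : R) :
  (0 <= k)%R -> (forall i, I i -> 0 <= a i) ->
  \esum_(i in I) (a i * k%:E)%E = ((\esum_(i in I) a i) * k%:E)%E.
Proof.
move=> k0 a0; rewrite [RHS]muleC -esumZl //; apply: eq_esum => i _; exact: muleC.
Qed.

Lemma esum_swap (R : realType) (T1 T2 : choiceType) (I : set T1) (J : set T2)
  (f : T1 -> T2 -> \bar R) : (forall i j, I i -> J j -> 0 <= f i j) ->
  \esum_(i in I) \esum_(j in J) f i j = \esum_(j in J) \esum_(i in I) f i j.
Proof.
move=> f0; rewrite (@esum_esum _ _ _ I (fun=> J)) //.
rewrite (@esum_esum _ _ _ J (fun=> I)); last by move=> j i Jj Ii; exact: f0.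
rewrite (reindex_esum (J `*`` fun=> I) _ (fun x => (x.2, x.1))) //.
split=> /=.
- by move=> [j i] [/= Jj Ii]; split.
- by move=> [j1 i1] [j2 i2] /= _ _ [-> ->].
- by move=> [i j] [/= Ii Jj]; exists (j, i).
Qed.

End EsumExtra.

Section Policy.
Variables (R : realType) (S A O : finType).
Variables (T : S -> A -> S -> R) (Ob : S -> O -> R) (r : S -> A -> R) (Rmax gamma : R).
Hypotheses (hT : forall s a, is_dist (T s a)) (hOb : forall s, is_dist (Ob s))
  (hr : forall s a, 0 <= r s a <= Rmax) (hR0 : 0 <= Rmax)
  (hg0 : 0 <= gamma) (hg1 : gamma < 1).
Variable B : set (belief R S).
Hypotheses (Bd : forall b, B b -> is_dist b)
  (Bc : forall b a o, B b -> 0 < Pobs T Ob b a o -> B (bupd T Ob b a o)).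

Local Notation P := (Pobs T Ob).
Local Notation bu := (bupd T Ob).
Local Notation V := (Vtrue_n T Ob r gamma).

Definition Mv := Rmax / (1 - gamma).

Lemma omg_gt0 : 0 < 1 - gamma. Proof. by rewrite subr_gt0. Qed.

Lemma Mv_ge0 : 0 <= Mv.
Proof. by rewrite /Mv divr_ge0 // ltW // omg_gt0. Qed.

Lemma Mv_eq : Rmax + gamma * Mv = Mv.
Proof.
have h := omg_gt0; rewrite /Mv; field.
by rewrite gt_eqF.
Qed.

Lemma Pdist b a : B b -> is_dist (P b a).
Proof.
move=> hb; split; first by move=> o; apply: Pobs_ge0 => //; exact: Bd.
exact: Pobs_sum1 (Bd hb).
Qed.

Lemma P_cases b a o : B b -> P b a o = 0 \/ 0 < P b a o.
Proof.
move=> hb; have := Pobs_ge0 hT hOb a o (Bd hb).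
by rewrite le0r => /orP[/eqP->|->]; [left|right].
Qed.

Lemma Qavg (f : belief R S -> R) lo hi b a : B b ->
  (forall b', B b' -> lo <= f b' <= hi) ->
  lo <= \sum_o P b a o * f (bu b a o) <= hi.
Proof.
move=> hb hf; apply: avg_bound (Pdist a hb) _ => o hP; exact: hf _ (Bc hb hP).
Qed.

Section Pol.
Variable pol : belief R S -> A -> R.
Hypothesis hpol : forall b, B b -> is_dist (pol b).

Lemma VnS n b : V pol n.+1 b = \sum_a pol b a *
  (rb r b a + gamma * \sum_o P b a o * V pol n (bu b a o)).
Proof. by []. Qed.

Lemma Vn_bound n b : B b -> 0 <= V pol n b <= Mv.
Proof.
elim: n b => [|n IH] b hb; first by rewrite /= lexx Mv_ge0.
rewrite VnS; apply: avg_bound (hpol hb) _ => a _.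
have /andP[h1 h2] := Qavg a hb IH.
have /andP[r1 r2] := rb_bound hr a (Bd hb).
apply/andP; split; first by rewrite addr_ge0 // mulr_ge0.
by rewrite -Mv_eq lerD // ler_wpM2l.
Qed.

Lemma Vn_mono n b : B b -> V pol n b <= V pol n.+1 b.
Proof.
elim: n b => [|n IH] b hb; first by have /andP[] := Vn_bound 1 hb.
rewrite (VnS n.+1 b) (VnS n b); apply: ler_sum => a _.
apply: ler_wpM2l; first by case: (hpol hb).
rewrite lerD2l; apply: ler_wpM2l => //; apply: ler_sum => o _.
case: (P_cases a o hb) => [->|hP]; first by rewrite !mul0r.
by apply: ler_wpM2l; [exact: ltW|apply: IH; exact: Bc].
Qed.

Definition vlim b := limn (fun n => V pol n b).

Lemma V_cvg b : B b -> cvgn (fun n => V pol n b).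
Proof.
move=> hb; apply: nondecreasing_is_cvgn.
  by apply/nondecreasing_seqP => n; exact: Vn_mono.
by exists Mv => _ [n _ <-]; have /andP[] := Vn_bound n hb.
Qed.

Lemma Vn_le_vlim n b : B b -> V pol n b <= vlim b.
Proof.
move=> hb; apply: nondecreasing_cvgn_le; last exact: V_cvg.
by apply/nondecreasing_seqP => m; exact: Vn_mono.
Qed.

Lemma vlim_le x b : B b -> (forall n, V pol n b <= x) -> vlim b <= x.
Proof. by move=> hb h; apply: limr_le; [exact: V_cvg|exact: nearW]. Qed.

Lemma vlim_bound b : B b -> 0 <= vlim b <= Mv.
Proof.
move=> hb; apply/andP; split.
  by apply: le_trans (Vn_le_vlim 0 hb); rewrite /=.
by apply: vlim_le => // n; have /andP[] := Vn_bound n hb.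
Qed.

Lemma Vtrue_E b : B b -> Vtrue T Ob r gamma pol b = (vlim b)%:E.
Proof. by move=> hb; exact: EFin_lim (V_cvg hb). Qed.

Lemma bellman b : B b -> vlim b = \sum_a pol b a *
  (rb r b a + gamma * \sum_o P b a o * vlim (bu b a o)).
Proof.
move=> hb; rewrite /vlim; apply: (cvg_lim (@Rhausdorff R)).
rewrite -cvg_shiftS /=.
apply: cvg_big; first exact: add_continuous.
move=> a _; apply: cvgMl_tmp; apply: cvgD; first exact: cvg_cst.
apply: cvgMl_tmp; apply: cvg_big; first exact: add_continuous.
move=> o _; case: (P_cases a o hb) => [->|hP].
  rewrite mul0r; under eq_cvg do rewrite mul0r; exact: cvg_cst.
apply: cvgMl_tmp; exact: (V_cvg (Bc hb hP)).
Qed.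

End Pol.

Section Diff.
Variables (pol1 pol2 : belief R S -> A -> R) (delta : R).
Hypotheses (hpol1 : forall b, B b -> is_dist (pol1 b))
  (hpol2 : forall b, B b -> is_dist (pol2 b)) (hd0 : 0 <= delta)
  (hd : forall b, B b -> norm1 (fun a => pol1 b a - pol2 b a) <= delta).

Definition Fd := delta * Mv / (1 - gamma).

Lemma Fd_eq : delta * Mv + gamma * Fd = Fd.
Proof. have h := omg_gt0; rewrite /Fd; field; by rewrite gt_eqF. Qed.

Lemma Fd_ge0 : 0 <= Fd.
Proof.
have h := omg_gt0; rewrite /Fd; apply: mulr_ge0; [apply: mulr_ge0 => //; exact: Mv_ge0|rewrite invr_ge0; exact: ltW].
Qed.

Lemma Vn_diff n b : B b -> `|V pol1 n b - V pol2 n b| <= Fd.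
Proof.
elim: n b => [|n IH] b hb; first by rewrite /= subrr normr0 Fd_ge0.
set Q1 := fun a => rb r b a + gamma * \sum_o P b a o * V pol1 n (bu b a o).
set Q2 := fun a => rb r b a + gamma * \sum_o P b a o * V pol2 n (bu b a o).
have eQ a : Q1 a - Q2 a = gamma * \sum_o P b a o *
    (V pol1 n (bu b a o) - V pol2 n (bu b a o)).
  rewrite /Q1 /Q2 /=.
  have -> : \sum_o P b a o * (V pol1 n (bu b a o) - V pol2 n (bu b a o)) =
    \sum_o P b a o * V pol1 n (bu b a o) - \sum_o P b a o * V pol2 n (bu b a o).
    by rewrite -sumrB; apply: eq_bigr => o _; rewrite mulrBr.
  ring.
have -> : V pol1 n.+1 b - V pol2 n.+1 b =
    \sum_a (pol1 b a - pol2 b a) * Q1 a + \sum_a pol2 b a * (Q1 a - Q2 a).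
  rewrite (VnS pol1 n b) (VnS pol2 n b) -/Q1 -/Q2 -sumrB -big_split /=.
  by apply: eq_bigr => a _; rewrite /Q1 /Q2 /=; ring.
rewrite -Fd_eq; apply: le_trans (ler_normD _ _) _; apply: lerD.
  apply: le_trans (ler_norm_sum _ _ _) _.
  apply: (@le_trans _ _ (\sum_a `|pol1 b a - pol2 b a| * Mv)).
    apply: ler_sum => a _; rewrite normrM ler_wpM2l //.
    have /andP[h1 h2] := Qavg a hb (Vn_bound hpol1 n).
    have /andP[r1 r2] := rb_bound hr a (Bd hb).
    rewrite ger0_norm; last by rewrite /Q1 addr_ge0 // mulr_ge0.
    by rewrite /Q1 -Mv_eq lerD // ler_wpM2l.
  by rewrite -mulr_suml ler_wpM2r ?Mv_ge0 // (hd hb).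
rewrite ler_norml; apply: avg_bound (hpol2 hb) _ => a _.
rewrite eQ -mulrN; have IH' : forall b', B b' ->
    - Fd <= V pol1 n b' - V pol2 n b' <= Fd.
  by move=> b' hb'; rewrite -ler_norml; exact: IH.
have /andP[h1 h2] := Qavg a hb IH'.
by rewrite !ler_wpM2l.
Qed.

Lemma vlim_diff b : B b -> `|vlim pol1 b - vlim pol2 b| <= Fd.
Proof.
move=> hb.
have key n : V pol1 n b <= V pol2 n b + Fd /\ V pol2 n b <= V pol1 n b + Fd.
  by have := Vn_diff n hb; rewrite ler_norml => /andP[h1 h2]; split; lra.
have e1 : vlim pol1 b <= vlim pol2 b + Fd.
  apply: vlim_le => // n; apply: le_trans (proj1 (key n)) _.
  by rewrite lerD2r Vn_le_vlim.
have e2 : vlim pol2 b <= vlim pol1 b + Fd.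
  apply: vlim_le => // n; apply: le_trans (proj2 (key n)) _.
  by rewrite lerD2r Vn_le_vlim.
rewrite ler_norml; apply/andP; split; lra.
Qed.

End Diff.

Section Abs.
Variables (phi : belief R S -> belief R S) (C : set (belief R S))
  (p : belief R S -> belief R S -> R) (pi : belief R S -> A -> R) (LV eps : R).
Hypotheses (hCB : C `<=` B) (hphiC : forall b, B b -> C (phi b))
  (hpi : forall b, B b -> is_dist (pi b))
  (hp : forall c, C c ->
     (forall b, 0 <= p c b) /\
     (forall b, p c b != 0 -> B b /\ phi b = c) /\
     (\esum_(b in B) (p c b)%:E = 1)%E)
  (hLV0 : 0 <= LV) (heps : 0 <= eps)
  (hclose : forall b1 b2, B b1 -> B b2 -> phi b1 = phi b2 -> norm1 (b1 - b2) <= eps).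

Local Notation U := (Vbin_n T Ob r gamma B C phi p pi).
Local Notation pol2 := (fun b => pi (phi b)).
Local Notation w := (vlim pol2).

Hypothesis hLip : forall b1 b2, B b1 -> B b2 ->
  `|w b1 - w b2| <= LV * norm1 (b1 - b2).

Lemma hpol2 b : B b -> is_dist (pol2 b).
Proof. by move=> hb; apply: hpi; apply: hCB; exact: hphiC. Qed.

Lemma UnS n c : U n.+1 c = (\sum_a (pi c a)%:E *
      (rphi r B p c a + gamma%:E * \esum_(c' in C)
         (Pphi T Ob B phi p c' c a * U n c')))%E.
Proof. by []. Qed.

Lemma rphi_ge0 c a : C c -> (0 <= rphi r B p c a)%E.
Proof.
move=> hc; have [p0 _] := hp hc; apply: esum_ge0 => b hb; rewrite lee_fin.
by rewrite mulr_ge0 // (andP (rb_bound hr a (Bd hb))).1.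
Qed.

Lemma Pphi_ge0 c' c a : C c -> (0 <= Pphi T Ob B phi p c' c a)%E.
Proof.
move=> hc; have [p0 _] := hp hc; apply: esum_ge0 => b hb; rewrite lee_fin.
rewrite mulr_ge0 //; apply: sumr_ge0 => o _; exact: Pobs_ge0 (Bd hb).
Qed.

Lemma U_ge0 n c : C c -> (0 <= U n c)%E.
Proof.
elim: n c => [|n IH] c hc; first by [].
rewrite UnS; apply: sume_ge0 => a _; apply: mule_ge0.
  by rewrite lee_fin; case: (hpi (hCB hc)).
apply: adde_ge0; first exact: rphi_ge0.
apply: mule_ge0; first by rewrite lee_fin.
apply: esum_ge0 => c' hc'; apply: mule_ge0; [exact: Pphi_ge0|exact: IH].
Qed.

Lemma U_mono n c : C c -> (U n c <= U n.+1 c)%E.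
Proof.
elim: n c => [|n IH] c hc; first exact: U_ge0.
rewrite (UnS n.+1 c) (UnS n c); apply: lee_sum => a _.
apply: lee_wpmul2l; first by rewrite lee_fin; case: (hpi (hCB hc)).
apply: leeD => //; apply: lee_wpmul2l; first by rewrite lee_fin.
apply: le_esum => c' hc'; apply: lee_wpmul2l; [exact: Pphi_ge0|exact: IH].
Qed.

Lemma witness c : C c -> exists b, B b /\ phi b = c.
Proof.
move=> hc; have [p0 [ps p1]] := hp hc.
apply: contrapT => hn.
have h0 : (\esum_(b in B) (p c b)%:E = 0)%E.
  apply: esum1 => b hb.
  case: (eqVneq (p c b) 0) => [->//|/ps [hb' e]].
  by exfalso; apply: hn; exists b.
by move: p1; rewrite h0 => -[] /eqP; rewrite eq_sym oner_eq0.
Qed.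

Lemma Gterm_ge0 n b a o : B b -> (0 <= (P b a o)%:E * U n (phi (bu b a o)))%E.
Proof.
move=> hb; case: (P_cases a o hb) => [->|hP]; first by rewrite mul0e.
apply: mule_ge0; first by rewrite lee_fin ltW.
apply: U_ge0; apply: hphiC; exact: Bc.
Qed.

Lemma E1 n c a : C c -> (forall c', C c' -> U n c' \is a fin_num) ->
  (\esum_(c' in C) (Pphi T Ob B phi p c' c a * U n c') =
   \esum_(b in B) ((p c b)%:E *
      \sum_o ((P b a o)%:E * U n (phi (bu b a o)))))%E.
Proof.
move=> hc hf; have [p0 [ps _]] := hp hc.
have S0 b c' : B b ->
    0 <= \sum_(o | `[< phi (bu b a o) = c' >]) P b a o.
  by move=> hb; apply: sumr_ge0 => o _; exact: Pobs_ge0 (Bd hb).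
transitivity (\esum_(c' in C) \esum_(b in B)
   ((p c b * \sum_(o | `[< phi (bu b a o) = c' >]) P b a o)%:E * U n c'))%E.
  apply: eq_esum => c' hc'; rewrite /Pphi.
  have g0 := U_ge0 n hc'; have gf := hf c' hc'.
  rewrite -(fineK gf) esumZr //; first by rewrite -lee_fin fineK.
  by move=> b hb; rewrite lee_fin mulr_ge0 // S0.
rewrite esum_swap; last first.
  move=> c' b hc' hb; apply: mule_ge0; last exact: U_ge0.
  by rewrite lee_fin mulr_ge0 // S0.
apply: eq_esum => b hb.
transitivity (\esum_(c' in C) \sum_o ((p c b)%:E *
   (if `[< phi (bu b a o) = c' >] then (P b a o)%:E * U n c' else 0)))%E.
  apply: eq_esum => c' hc'.
  rewrite big_mkcond /= mulr_sumr -sumEFin ge0_sume_distrl; last first.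
    move=> o _; rewrite lee_fin mulr_ge0 //; case: ifP => // _.
    exact: Pobs_ge0 (Bd hb).
  apply: eq_bigr => o _; case: ifP => _.
    by rewrite EFinM muleA.
  by rewrite mulr0 mul0e mule0.
rewrite esum_sum; last first.
  move=> c' o hc' _; apply: mule_ge0; first by rewrite lee_fin.
  case: ifP => // _; apply: mule_ge0; last exact: U_ge0.
  by rewrite lee_fin; exact: Pobs_ge0 (Bd hb).
rewrite ge0_sume_distrr; last by move=> o _; exact: Gterm_ge0.
apply: eq_bigr => o _.
rewrite esumZl //; last first.
  move=> c' hc'; case: ifP => // _; apply: mule_ge0; last exact: U_ge0.
  by rewrite lee_fin; exact: Pobs_ge0 (Bd hb).
congr (_ * _)%E.
case: (P_cases a o hb) => [P0|hP].
  rewrite P0 mul0e; apply: esum1 => c' _; rewrite mul0e; by case: ifP.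
have hx : C (phi (bu b a o)) by apply: hphiC; exact: Bc.
transitivity (\esum_(c' in [set phi (bu b a o)])
    (if `[< phi (bu b a o) = c' >] then (P b a o)%:E * U n c' else 0))%E.
  rewrite esum_mkcond [in RHS]esum_mkcond; apply: eq_esum => c' _.
  case: (pselect (phi (bu b a o) = c')) => [<-|ne].
    by rewrite asboolT // !mem_set.
  by rewrite asboolF // !if_same.
rewrite esum_set1; first by rewrite asboolT.
rewrite asboolT //; apply: mule_ge0; last exact: U_ge0.
by rewrite lee_fin ltW.
Qed.

Definition Gf n b a := (\sum_o ((P b a o)%:E * U n (phi (bu b a o))))%E.
Definition Phi n c b := (\sum_a ((pi c a)%:E *
   ((rb r b a)%:E + gamma%:E * Gf n b a)))%E.

Lemma Gf_ge0 n b a : B b -> (0 <= Gf n b a)%E.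
Proof. by move=> hb; apply: sume_ge0 => o _; exact: Gterm_ge0. Qed.

Lemma REP n c : C c -> (forall c', C c' -> U n c' \is a fin_num) ->
  U n.+1 c = (\esum_(b in B) ((p c b)%:E * Phi n c b))%E.
Proof.
move=> hc hf; have [p0 [ps _]] := hp hc.
have pic a : 0 <= pi c a by case: (hpi (hCB hc)).
rewrite UnS.
transitivity (\sum_a ((pi c a)%:E * (\esum_(b in B) ((p c b)%:E * (rb r b a)%:E)
   + gamma%:E * \esum_(b in B) ((p c b)%:E * Gf n b a))))%E.
  by apply: eq_bigr => a _; rewrite E1.
have rb0 b a : B b -> 0 <= rb r b a by move=> hb; case/andP: (rb_bound hr a (Bd hb)).
under eq_bigr => a _.
  rewrite -esumZl //; last by move=> b hb; apply: mule_ge0; [rewrite lee_fin|exact: Gf_ge0].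
  rewrite -esumD; last first.
    - by move=> b hb; apply: mule_ge0; [rewrite lee_fin|apply: mule_ge0; [rewrite lee_fin|exact: Gf_ge0]].
    - by move=> b hb; rewrite lee_fin mulr_ge0 // rb0.
  rewrite -esumZl //; last first.
    move=> b hb; apply: adde_ge0; first by rewrite lee_fin mulr_ge0 // rb0.
    by apply: mule_ge0; [rewrite lee_fin|apply: mule_ge0; [rewrite lee_fin|exact: Gf_ge0]].
  over.
rewrite -esum_sum; last first.
  move=> b a hb _; apply: mule_ge0; first by rewrite lee_fin.
  apply: adde_ge0; first by rewrite lee_fin mulr_ge0 // rb0.
  by apply: mule_ge0; [rewrite lee_fin|apply: mule_ge0; [rewrite lee_fin|exact: Gf_ge0]].
apply: eq_esum => b hb; rewrite /Phi ge0_sume_distrr; last first.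
  move=> a _; apply: mule_ge0; first by rewrite lee_fin.
  apply: adde_ge0; first by rewrite lee_fin rb0.
  by apply: mule_ge0; [rewrite lee_fin|exact: Gf_ge0].
apply: eq_bigr => a _.
rewrite [(gamma%:E * _)%E]muleCA -ge0_muleDr; first exact: muleCA.
  by rewrite lee_fin rb0.
by apply: mule_ge0; [rewrite lee_fin|exact: Gf_ge0].
Qed.


Definition Qs (f : belief R S -> R) b :=
  \sum_a pol2 b a * (rb r b a + gamma * \sum_o P b a o * f (bu b a o)).

Lemma Qs_mono f g b : B b -> (forall x, B x -> f x <= g x) -> Qs f b <= Qs g b.
Proof.
move=> hb hfg; rewrite /Qs; apply: ler_sum => a _.
apply: ler_wpM2l; first by case: (hpol2 hb).
rewrite lerD2l; apply: ler_wpM2l => //; apply: ler_sum => o _.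
case: (P_cases a o hb) => [->|hP]; first by rewrite !mul0r.
by apply: ler_wpM2l; [exact: ltW|apply: hfg; exact: Bc].
Qed.

Lemma Qs_shift g d b : B b -> Qs (fun x => g x + d) b = Qs g b + gamma * d.
Proof.
move=> hb; rewrite /Qs.
have e a : \sum_o P b a o * (g (bu b a o) + d) = \sum_o P b a o * g (bu b a o) + d.
  rewrite -[d in RHS]mulr1 -(Pobs_sum1 hT hOb a (Bd hb)) mulr_sumr -big_split.
  by apply: eq_bigr => o _ /=; ring.
transitivity (\sum_a (pol2 b a * (rb r b a + gamma * \sum_o P b a o * g (bu b a o))
   + pol2 b a * (gamma * d))).
  by apply: eq_bigr => a _; rewrite e; ring.
by rewrite big_split /= -mulr_suml (proj2 (hpol2 hb)) mul1r.
Qed.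

Lemma Qs_w b : B b -> Qs (vlim pol2) b = vlim pol2 b.
Proof. by move=> hb; rewrite /Qs; exact: (esym (bellman hpol2 hb)). Qed.

Lemma Phi_real n b : B b -> (forall c', C c' -> U n c' \is a fin_num) ->
  Phi n (phi b) b = (Qs (fun x => fine (U n (phi x))) b)%:E.
Proof.
move=> hb hf; rewrite /Phi /Qs -sumEFin; apply: eq_bigr => a _.
rewrite EFinM EFinD EFinM /Gf; congr (_ * (_ + _ * _))%E.
rewrite -sumEFin; apply: eq_bigr => o _; case: (P_cases a o hb) => [->|hP].
  by rewrite mul0e mul0r.
by rewrite EFinM fineK //; apply: hf; apply: hphiC; exact: Bc.
Qed.

Definition Kc := LV * eps / (1 - gamma).

Lemma Kc_eq : LV * eps + gamma * Kc = Kc.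
Proof. have h := omg_gt0; rewrite /Kc; field; by rewrite gt_eqF. Qed.

Lemma Kc_ge0 : 0 <= Kc.
Proof.
have h := omg_gt0; rewrite /Kc; apply: mulr_ge0; first exact: mulr_ge0.
by rewrite invr_ge0 ltW.
Qed.

Lemma fin_between (x z : R) (y : \bar R) : (x%:E <= y)%E -> (y <= z%:E)%E ->
  y \is a fin_num.
Proof. by case: y. Qed.

Lemma AVGup c (X : belief R S -> \bar R) hi : C c -> 0 <= hi ->
  (forall b, B b -> phi b = c -> (X b <= hi%:E)%E) ->
  (\esum_(b in B) ((p c b)%:E * X b) <= hi%:E)%E.
Proof.
move=> hc hi0 hX; have [p0 [ps p1]] := hp hc.
apply: (@le_trans _ _ (\esum_(b in B) ((p c b)%:E * hi%:E))%E).
  apply: le_esum => b hb; case: (eqVneq (p c b) 0) => [->|/ps [_ e]].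
    by rewrite !mul0e.
  by apply: lee_wpmul2l; [rewrite lee_fin|exact: hX].
by rewrite esumZr // ?p1 ?mul1e // => b _; rewrite lee_fin.
Qed.

Lemma AVGlo c (X : belief R S -> \bar R) lo : C c -> 0 <= lo ->
  (forall b, B b -> phi b = c -> (lo%:E <= X b)%E) ->
  (lo%:E <= \esum_(b in B) ((p c b)%:E * X b))%E.
Proof.
move=> hc lo0 hX; have [p0 [ps p1]] := hp hc.
apply: (@le_trans _ _ (\esum_(b in B) ((p c b)%:E * lo%:E))%E); last first.
  apply: le_esum => b hb; case: (eqVneq (p c b) 0) => [->|/ps [_ e]].
    by rewrite !mul0e.
  by apply: lee_wpmul2l; [rewrite lee_fin|exact: hX].
by rewrite esumZr // ?p1 ?mul1e // => b _; rewrite lee_fin.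
Qed.

Lemma Ubound n b : B b ->
  ((w b - Kc - gamma ^+ n * Mv)%:E <= U n (phi b))%E /\
  (U n (phi b) <= (w b + Kc)%:E)%E.
Proof.
elim: n b => [|n IH] b hb.
  have /andP[w0 w1] := vlim_bound hpol2 hb.
  have k0 := Kc_ge0.
  by rewrite /= !lee_fin expr0 mul1r; split; lra.
have hf c' : C c' -> U n c' \is a fin_num.
  move=> hc'; have [b1 [hb1 <-]] := witness hc'.
  by have [h1 h2] := IH b1 hb1; exact: fin_between h1 h2.
have hc := hphiC hb.
pose ub := fun x => fine (U n (phi x)).
have hub x : B x -> w x - Kc - gamma ^+ n * Mv <= ub x <= w x + Kc.
  move=> hx; have [h1 h2] := IH x hx.
  by rewrite /ub -!lee_fin !fineK ?h1 ?h2 //; apply: hf; exact: hphiC.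
have k0 := Kc_ge0; have m0 := Mv_ge0.
have hwb := vlim_bound hpol2 hb.
have near b' : B b' -> phi b' = phi b -> `|w b' - w b| <= LV * eps.
  move=> hb' e; apply: le_trans (hLip hb' hb) _.
  by apply: ler_wpM2l => //; exact: hclose.
rewrite (REP hc hf); split.
  set lo := w b - Kc - gamma ^+ n.+1 * Mv.
  case: (lerP lo 0) => hlo.
    apply: le_trans (_ : (0%:E <= _)%E); first by rewrite lee_fin.
    apply: esum_ge0 => b' hb'; apply: mule_ge0.
      by rewrite lee_fin; case: (hp hc).
    apply: sume_ge0 => a _; apply: mule_ge0.
      by rewrite lee_fin; case: (hpi (hCB hc)).
    apply: adde_ge0; first by rewrite lee_fin; case/andP: (rb_bound hr a (Bd hb')).
    by apply: mule_ge0; [rewrite lee_fin|exact: Gf_ge0].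
  apply: AVGlo => //; first exact: ltW.
  move=> b' hb' e; rewrite -e Phi_real // lee_fin.
  have d := near b' hb' e.
  set dd := Kc + gamma ^+ n * Mv.
  apply: (@le_trans _ _ (Qs (fun x => w x + - dd) b')).
    rewrite Qs_shift // Qs_w //; move: d; rewrite ler_norml => /andP[d1 d2].
    have E1 : gamma * - dd = - (gamma * Kc) - gamma ^+ n.+1 * Mv.
      by rewrite /dd exprS; ring.
    rewrite E1 /lo; have := Kc_eq; lra.
  apply: Qs_mono => // x hx; have /andP[h1 h2] := hub x hx; rewrite /ub in h1 h2; rewrite /dd; lra.
apply: AVGup => //; first by case/andP: hwb => w0 _; lra.
move=> b' hb' e; rewrite -e Phi_real // lee_fin.
have d := near b' hb' e.
apply: (@le_trans _ _ (Qs (fun x => w x + Kc) b')).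
  by apply: Qs_mono => // x hx; have /andP[h1 h2] := hub x hx; rewrite /ub in h1 h2.
rewrite Qs_shift // Qs_w //; move: d; rewrite ler_norml => /andP[d1 d2].
have := Kc_eq; lra.
Qed.


Lemma Vbin_close b : B b -> exists u : R,
  Vbin T Ob r gamma B C phi p pi (phi b) = u%:E /\ `|w b - u| <= Kc.
Proof.
move=> hb; have hc := hphiC hb.
pose un n := fine (U n (phi b)).
have Uf n : U n (phi b) \is a fin_num.
  by have [h1 h2] := Ubound n hb; exact: fin_between h1 h2.
have eU : (fun n => U n (phi b)) = (fun n => (un n)%:E).
  by apply: funext => n; rewrite /un fineK.
have mono : nondecreasing_seq un.
  apply/nondecreasing_seqP => n; rewrite -lee_fin /un !fineK //.
  exact: U_mono.
have ub n : un n <= w b + Kc.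
  by rewrite -lee_fin /un fineK //; have [_ h2] := Ubound n hb.
have lb n : w b - Kc - gamma ^+ n * Mv <= un n.
  by rewrite -lee_fin /un fineK //; have [h1 _] := Ubound n hb.
have cu : cvgn un.
  by apply: nondecreasing_is_cvgn => //; exists (w b + Kc) => _ [n _ <-].
exists (limn un); split.
  by rewrite /Vbin eU; exact: EFin_lim cu.
have l1 : limn un <= w b + Kc by apply: limr_le => //; exact: nearW.
have hga : `|gamma| < 1 by rewrite ger0_norm.
have h1 : (fun n => gamma ^+ n * Mv) @ \oo --> 0 * Mv.
  exact: cvgMr_tmp (cvg_expr hga).
rewrite mul0r in h1.
have h2 : (fun n => w b - Kc - gamma ^+ n * Mv) @ \oo --> w b - Kc.
  rewrite -[X in _ --> X]subr0; apply: cvgB; [exact: cvg_cst|exact: h1].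
have l2 : w b - Kc <= limn un.
  apply: (cvgr_to_le h2); apply: nearW => n /=.
  apply: le_trans (lb n) _; exact: nondecreasing_cvgn_le.
by rewrite ler_norml; apply/andP; split; lra.
Qed.

End Abs.
End Policy.

Unset Implicit Arguments.

Theorem theorem2 (R : realType) (S A O : finType)
  (T : S -> A -> S -> R) (Ob : S -> O -> R) (r : S -> A -> R)
  (Rmax gamma : R)
  (hT : forall s a, is_dist (T s a))
  (hOb : forall s, is_dist (Ob s))
  (hr : forall s a, 0 <= r s a <= Rmax)
  (hgamma : 0 <= gamma < 1)
  (b0 : belief R S) (hb0 : is_dist b0)
  (phi : belief R S -> belief R S) (C : set (belief R S))
  (p : belief R S -> belief R S -> R)
  (pi : belief R S -> A -> R) (Lpi LV eps : R) :
  let B := [set b | reachable T Ob b0 b] in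
  0 <= eps ->
  C `<=` B ->
  (forall b, B b -> C (phi b)) ->
  (forall b, B b -> norm1 (phi b - b) <= eps) ->
  (forall b1 b2, B b1 -> B b2 -> phi b1 = phi b2 -> norm1 (b1 - b2) <= eps) ->
  (* p_c is a probability distribution on B supported on phi^{-1}(c) *)
  (forall c, C c ->
     (forall b, 0 <= p c b) /\
     (forall b, p c b != 0 -> B b /\ phi b = c) /\
     \esum_(b in B) (p c b)%:E = 1%E) ->
  (forall b, B b -> is_dist (pi b)) ->
  0 <= Lpi -> 0 <= LV ->
  (* local stability *)
  (forall b1 b2, B b1 -> B b2 ->
     norm1 (fun a => pi b1 a - pi b2 a) <= Lpi * norm1 (b1 - b2)) ->
  (* value stability of V_true^{[pi_phi]_true} *)
  (forall b1 b2, B b1 -> B b2 ->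
     (`| Vtrue T Ob r gamma (fun b => pi (phi b)) b1
        - Vtrue T Ob r gamma (fun b => pi (phi b)) b2 |
      <= (LV * norm1 (b1 - b2))%:E)%E) ->
  forall b, B b ->
    (`| Vtrue T Ob r gamma pi b
       - Vbin T Ob r gamma B C phi p pi (phi b) |
     <= (Lphi1 Lpi LV Rmax gamma * eps)%:E)%E.
Proof.
move=> B heps hCB hphiC hphi_eps hclose hp hpi hLpi hLV hloc hval b hb.
have Bd : forall x, B x -> is_dist x by move=> x hx; exact: (reach_dist hT hOb hb0 hx).
have Bc : forall x a o, B x -> 0 < Pobs T Ob x a o -> B (bupd T Ob x a o).
  by move=> x a o hx hP; exact: reachS.
have hB0 : B b0 by exact: reach0.
case/andP: hgamma => hg0 hg1.
have hR0 : 0 <= Rmax.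
  have [s0 _] : exists s : S, true.
    case: (pickP (@predT S)) => [s _|h]; first by exists s.
    by exfalso; move: (proj2 hb0); rewrite big_pred0 // => /eqP; rewrite eq_sym oner_eq0.
  have [a0 _] : exists a : A, true.
    case: (pickP (@predT A)) => [a _|h]; first by exists a.
    by exfalso; move: (proj2 (hpi b0 hB0)); rewrite big_pred0 // => /eqP; rewrite eq_sym oner_eq0.
  by have /andP[h1 h2] := hr s0 a0; exact: le_trans h1 h2.
have hpol2 : forall x, B x -> is_dist (pi (phi x)).
  by move=> x hx; apply: hpi; apply: hCB; exact: hphiC.
have hLip : forall b1 b2, B b1 -> B b2 ->
    `|vlim T Ob r gamma (fun x => pi (phi x)) b1 - vlim T Ob r gamma (fun x => pi (phi x)) b2|
    <= LV * norm1 (b1 - b2).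
  move=> b1 b2 h1 h2; have := hval b1 b2 h1 h2.
  by rewrite (Vtrue_E hT hOb hr hR0 hg0 hg1 Bd Bc hpol2 h1)
    (Vtrue_E hT hOb hr hR0 hg0 hg1 Bd Bc hpol2 h2) -EFinB /= lee_fin.
have [u [hu hwu]] := Vbin_close hT hOb hr hR0 hg0 hg1 Bd Bc hCB hphiC hpi hp hLV heps hclose hLip hb.
rewrite (Vtrue_E hT hOb hr hR0 hg0 hg1 Bd Bc hpi hb) hu -EFinB /= lee_fin.
have nsym (x y : belief R S) : norm1 (x - y) = norm1 (y - x).
  by rewrite /norm1; apply: eq_bigr => s _; rewrite distrC.
have hd : forall x, B x -> norm1 (fun a => pi x a - pi (phi x) a) <= Lpi * eps.
  move=> x hx; apply: (le_trans (hloc x (phi x) hx (hCB _ (hphiC x hx)))).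
  by rewrite ler_wpM2l // nsym hphi_eps.
have hvw := vlim_diff hT hOb hr hR0 hg0 hg1 Bd Bc hpi hpol2 (mulr_ge0 hLpi heps) hd hb.
set v := vlim T Ob r gamma pi b in hvw *.
set w := vlim T Ob r gamma (fun x => pi (phi x)) b in hvw hwu.
have hom : 0 < 1 - gamma by rewrite subr_gt0.
have key : Lphi1 Lpi LV Rmax gamma * eps = Fd Rmax gamma (Lpi * eps) + Kc gamma LV eps
   + (Rmax * eps / (1 - gamma) + LV * eps / (1 - gamma) + Rmax * eps / (1 - gamma) ^+ 2).
  rewrite /Lphi1 /Fd /Kc /Mv; field; by rewrite gt_eqF.
have D0 : 0 <= Rmax * eps / (1 - gamma) + LV * eps / (1 - gamma) + Rmax * eps / (1 - gamma) ^+ 2.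
  by rewrite !addr_ge0 // !mulr_ge0 // ?invr_ge0 ?exprn_ge0 // ltW.
rewrite key; move: hvw hwu D0; rewrite !ler_norml => /andP[h1 h2] /andP[h3 h4] D0.
apply/andP; split; lra.
Qed.
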